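(* Let $q$ be a prime power. Any classical (possibly randomized) algorithm that solves the hidden linear structure problem over $\mathit{GF}(q)$ with error probability at most $\tfrac12$ must make $\Omega(\sqrt q)$ queries to the black box.
   Context: The (classical) hidden linear structure problem over $\mathit{GF}(q)$: one is given a black box computing the map $\mathit{GF}(q)\times\mathit{GF}(q)\to\mathit{GF}(q)\times\mathit{GF}(q)$, $(x,y)\mapsto(x,\pi(y+sx))$, where $\pi$ is an arbitrary (unknown) permutation of $\mathit{GF}(q)$ and $s\in\mathit{GF}(q)$ is unknown. The goal is to determine $s$. Complexity is measured by the number of queries to the black box. *)

(* Defs.v *)
From HB Require Import structures.
From mathcomp Require Import all_boot all_order all_algebra all_fingroup all_field.
Set Implicit Arguments. Unset Strict Implicit. Unset Printing Implicit Defensive.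
Import Order.TTheory GRing.Theory Num.Theory.
Local Open Scope ring_scope.

Definition hls_oracle (F : finFieldType) (pi : {perm F}) (s : F) (xy : F * F)
  : F * F := (xy.1, pi (xy.2 + s * xy.1)).

(* A deterministic adaptive query algorithm is given by a "next query"
   function [qf] mapping the list of answers received so far to the next
   query (past queries are determined by past answers).  [history O qf k]
   is the list of the k answers received when run against the black box O. *)
Fixpoint history (F : finFieldType) (O : F * F -> F * F)
    (qf : seq (F * F) -> F * F) (k : nat) : seq (F * F) :=
  match k with
  | 0 => [::]
  | k'.+1 => let h := history O qf k' in rcons h (O (qf h))
  end.

(* Main.v *)
Require Import Defs.
From HB Require Import structures.
From mathcomp Require Import all_boot all_order all_algebra all_fingroup all_field.
From mathcomp Require Import zify ring.
Import Order.TTheory GRing.Theory Num.Theory.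
Set Implicit Arguments. Unset Strict Implicit. Unset Printing Implicit Defensive.
Local Open Scope ring_scope.

Section Tau.
Variable T : finType.
Lemma perm_ext (l : seq (T * T)) :
  {in l &, forall p q, (p.1 == q.1) = (p.2 == q.2)} ->
  exists t : {perm T}, forall p, p \in l -> t p.1 = p.2.
Proof.
elim: l => [|e l IH] H.
  by exists 1%g.
have H' : {in l &, forall p q, (p.1 == q.1) = (p.2 == q.2)}.
  by move=> p q pl ql; apply: H; rewrite inE ?pl ?ql orbT.
have [t Ht] := IH H'.
have He : forall p, p \in l -> (p.1 == e.1) = (p.2 == e.2).
  by move=> p pl; apply: H; rewrite inE ?pl ?eqxx ?orbT.
case: (boolP (has (fun p => p.1 == e.1) l)) => [/hasP [p pl /eqP pe]|hn].
  exists t => r; rewrite inE => /orP [/eqP ->|rl]; last exact: Ht.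
  have /eqP <- : p.2 == e.2 by rewrite -He // pe.
  by rewrite -pe Ht.
exists (t * tperm (t e.1) e.2)%g => r; rewrite inE permM => /orP [/eqP ->|rl].
  by rewrite tpermL.
rewrite Ht // tpermD //.
  rewrite -(Ht _ rl) (inj_eq perm_inj); apply/eqP => E.
  by move/hasPn: hn => /(_ _ rl); rewrite E eqxx.
rewrite eq_sym -He //; apply/negP => E.
by move/hasPn: hn => /(_ _ rl); rewrite E.
Qed.
End Tau.

Lemma sumc (I : finType) (n : nat) : (\sum_(i : I) n = #|I| * n)%N.
Proof. by rewrite sum_nat_const. Qed.

Section Hist.
Variable F : finFieldType.
Variable qf : seq (F * F) -> F * F.

Lemma histP (O : F * F -> F * F) k h :
  history O qf k = h <->
  size h = k /\ forall i, (i < k)%N -> nth (0,0) h i = O (qf (take i h)).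
Proof.
elim: k h => [|k IH] h /=.
  split=> [<-|[/eqP]]; first by split.
  by rewrite size_eq0 => /eqP ->.
split.
  move=> E; have [IH2 _] := IH (history O qf k).
  have [sz Hi] := IH2 (erefl _).
  rewrite -E size_rcons sz; split=> // i ik.
  rewrite nth_rcons -cats1 sz.
  case: (ltngtP i k) => [il|il|ie].
  - by rewrite takel_cat ?Hi // sz ltnW.
  - by move: ik; rewrite ltnS leqNgt il.
  - by rewrite ie take_size_cat.
case/lastP: h => [|h0 e]; first by case.
rewrite size_rcons => [[[sz] Hi]].
have Hh0 : history O qf k = h0.
  apply/IH; split=> // i ik.
  have := Hi i (ltnW ik).
  by rewrite nth_rcons -cats1 sz ik takel_cat // sz ltnW.
have := Hi k (ltnSn k).
rewrite nth_rcons sz ltnn eqxx -cats1 -sz take_size_cat // => ->.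
by rewrite -sz in Hh0; rewrite Hh0 cats1.
Qed.

Definition H (pi : {perm F}) (s : F) k := history (hls_oracle pi s) qf k.
Definition qx (h : seq (F*F)) i := (qf (take i h)).1.
Definition qy (h : seq (F*F)) i := (qf (take i h)).2.
Definition qz h s i := qy h i + s * qx h i.
Definition ans (h : seq (F*F)) i := (nth (0,0) h i).2.
Definition hx (h : seq (F*F)) i := (nth (0,0) h i).1.

Lemma size_H pi s k : size (H pi s k) = k.
Proof. by have [] := proj1 (histP (hls_oracle pi s) k (H pi s k)) (erefl _). Qed.

Lemma HP pi s h : H pi s (size h) = h <->
  forall i, (i < size h)%N -> hx h i = qx h i /\ pi (qz h s i) = ans h i.
Proof.
rewrite /H histP; split.
  by case=> _ Hi i il; rewrite /hx /ans Hi.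
move=> Hi; split=> // i il; have [E1 E2] := Hi i il.
rewrite /hls_oracle /qz /qy /qx /hx /ans in E1 E2 *.
by rewrite [LHS]surjective_pairing E1 -E2.
Qed.

Definition cnt h s : nat := (\sum_(pi : {perm F}) (H pi s (size h) == h))%N.

Definition ok h s : bool :=
  [forall i : 'I_(size h), hx h i == qx h i] &&
  [forall i : 'I_(size h), forall j : 'I_(size h),
      (qz h s i == qz h s j) == (ans h i == ans h j)].

Lemma real_ok pi s h : H pi s (size h) = h -> ok h s.
Proof.
move/HP => Hi; apply/andP; split; apply/forallP => i.
  by have [-> _] := Hi i (ltn_ord i).
apply/forallP => j.
have [_ <-] := Hi i (ltn_ord i); have [_ <-] := Hi j (ltn_ord j).
by rewrite (inj_eq perm_inj).
Qed.

Lemma cnt0 h s : ~~ ok h s -> cnt h s = 0%N.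
Proof.
move=> nok; rewrite /cnt big1 // => pi _.
by case: eqP => // /real_ok; rewrite (negbTE nok).
Qed.

Lemma cnt_le h s s' : ok h s -> ok h s' -> (cnt h s <= cnt h s')%N.
Proof.
move=> /andP [_ /forallP o1] /andP [_ /forallP o2].
set l := [seq (qz h s (val i), qz h s' (val i)) | i <- enum 'I_(size h)].
have Hl : {in l &, forall p q, (p.1 == q.1) = (p.2 == q.2)}.
  move=> p q /mapP [i _ ->] /mapP [j _ ->] /=.
  by rewrite (eqP (forallP (o1 i) j)) (eqP (forallP (o2 i) j)).
have [t Ht] := perm_ext Hl.
have Hti : forall i : 'I_(size h), t (qz h s i) = qz h s' i.
  move=> i; apply: (Ht (qz h s i, qz h s' i)).
  by apply/mapP; exists i; rewrite ?mem_enum.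
rewrite /cnt [X in (_ <= X)%N](reindex_inj (mulgI (t^-1)%g)).
apply: leq_sum => pi _.
case: eqP => // /HP Hi; rewrite leq_eqVlt; apply/orP; left; apply/eqP.
congr (nat_of_bool _); apply/esym/eqP/HP => i il; have [E1 E2] := Hi i il.
split=> //; rewrite permM -(Hti (Ordinal il)) permK //.
Qed.

Lemma cnt_eq h s s' : ok h s -> ok h s' -> cnt h s = cnt h s'.
Proof. by move=> o o'; apply/anti_leq; rewrite !cnt_le. Qed.

Definition coll (h : seq (F*F)) :=
  has (fun p => has (fun r => (p.1 != r.1) && (p.2 == r.2)) h) h.

Lemma coll_idx h i j : ~~ coll h -> (i < size h)%N -> (j < size h)%N ->
  ans h i = ans h j -> hx h i = hx h j.
Proof.
move/hasPn => nc il jl E.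
have := nc _ (mem_nth (0,0) il) => /hasPn /(_ _ (mem_nth (0,0) jl)).
rewrite /ans in E; rewrite E eqxx andbT negbK => /eqP.
by [].
Qed.

Definition bad h (ij : 'I_(size h) * 'I_(size h)) :=
  (qy h ij.2 - qy h ij.1) / (qx h ij.1 - qx h ij.2).

Lemma ok_bad h s0 s : ~~ coll h -> ok h s0 ->
  s \notin [set bad ij | ij : 'I_(size h) * 'I_(size h)] -> ok h s.
Proof.
move=> nc /andP [xc /forallP o0] nb; apply/andP; split=> //.
apply/forallP => i; apply/forallP => j.
have xe : forall k : 'I_(size h), hx h k = qx h k.
  by move=> k; apply/eqP; exact: (forallP xc k).
case: (eqVneq (qx h i) (qx h j)) => xij.
  rewrite -(eqP (forallP (o0 i) j)) /qz xij.
  by rewrite !(inj_eq (addIr _)).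
have -> : (ans h i == ans h j) = false.
  apply/negbTE/negP => /eqP E; move: xij.
  by rewrite -!xe (coll_idx nc (ltn_ord i) (ltn_ord j) E) eqxx.
apply/eqP; apply/negbTE/eqP => E; apply: (negP nb).
apply/imsetP; exists (i, j) => //=.
have d0 : qx h i - qx h j != 0 by rewrite subr_eq0.
rewrite /bad /=.
have -> : qy h j - qy h i = (qy h j + s * qx h j) - (qy h i + s * qx h i)
   + s * (qx h i - qx h j) by ring.
rewrite /qz in E; rewrite -E subrr add0r mulfK //.
Qed.

Lemma card_ok h s0 : ~~ coll h -> ok h s0 ->
  (#|F| - size h * size h <= #|[set s | ok h s]|)%N.
Proof.
move=> nc o0.
set B := [set bad ij | ij : 'I_(size h) * 'I_(size h)].
have sub : ~: B \subset [set s | ok h s].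
  by apply/subsetP => s; rewrite !inE => nb; exact: ok_bad nc o0 nb.
have cB : (#|B| <= size h * size h)%N.
  by rewrite (leq_trans (leq_imset_card _ _)) // card_prod !card_ord.
have := subset_leq_card sub; have := cardsC B => a b.
rewrite -a; apply: leq_trans _ b; rewrite leq_subLR leq_add2r //.
Qed.

Lemma cnt_bound h (S : {set F}) : ~~ coll h ->
  ((#|F| - size h * size h) * \sum_(s in S) cnt h s <= #|S| * \sum_s cnt h s)%N.
Proof.
move=> nc.
case: (pickP (ok h)) => [s0 o0|nok]; last first.
  by rewrite big1 ?muln0 // => s _; apply: cnt0; rewrite nok.
set c := cnt h s0.
have le : forall s, (cnt h s <= c)%N.
  move=> s; case: (boolP (ok h s)) => o; first by rewrite (cnt_eq o o0).
  by rewrite cnt0.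
have h1 : (\sum_(s in S) cnt h s <= #|S| * c)%N.
  by rewrite -sum_nat_const; apply: leq_sum => s _; exact: le.
have h2 : (#|[set s | ok h s]| * c <= \sum_s cnt h s)%N.
  rewrite -sum_nat_const.
  apply: (@leq_trans (\sum_(s in [set s | ok h s]) cnt h s)).
    apply: eq_leq; apply: eq_bigr => s; rewrite inE => o.
    by rewrite (cnt_eq o o0).
  by rewrite big_mkcond /=; apply: leq_sum => s _; case: ifP.
have h3 := card_ok nc o0.
apply: (leq_trans (leq_mul (leqnn _) h1)).
rewrite mulnCA leq_mul2l; apply/orP; right.
apply: leq_trans h2; rewrite leq_mul2r h3 orbT //.
Qed.

Lemma split_hist k (g : seq (F*F) -> {perm F} -> F -> nat) :
  (\sum_(pi : {perm F}) \sum_(s : F) g (H pi s k) pi s =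
   \sum_(h : k.-tuple (F*F)) \sum_(s : F) \sum_(pi : {perm F})
      (H pi s k == h) * g h pi s)%N.
Proof.
transitivity (\sum_(pi : {perm F}) \sum_(s : F) \sum_(h : k.-tuple (F*F))
      (H pi s k == h) * g h pi s)%N.
  apply: eq_bigr => pi _; apply: eq_bigr => s _.
  have sz : size (H pi s k) == k by rewrite size_H.
  rewrite (bigD1 (Tuple sz)) //= eqxx mul1n big1 ?addn0 // => h ht.
  case: eqP => // E; case/eqP: ht; apply: val_inj => /=; by rewrite E.
rewrite exchange_big /=.
under eq_bigr => s _ do rewrite exchange_big /=.
by rewrite exchange_big.
Qed.

Lemma sum_cnt k : (\sum_(h : k.-tuple (F*F)) \sum_(s : F) cnt h s = #|F| * #|{perm F}|)%N.
Proof.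
have E : (\sum_(pi : {perm F}) \sum_(s : F) 1 =
   \sum_(h : k.-tuple (F*F)) \sum_(s : F) \sum_(pi : {perm F})
      (H pi s k == h) * 1)%N := split_hist k (fun _ _ _ => 1%N).
move: E; rewrite !sumc muln1 mulnC => ->.
apply: eq_bigr => h _; apply: eq_bigr => s _.
by rewrite /cnt size_tuple; apply: eq_bigr => pi _; rewrite muln1.
Qed.

Lemma coll_rcons h e : ~~ coll h -> coll (rcons h e) ->
  exists2 p, p \in h & (p.1 != e.1) && (p.2 == e.2).
Proof.
move=> nc; rewrite /coll has_rcons => /orP [|].
  rewrite has_rcons eqxx /= => /hasP [r rh /andP [r1 r2]].
  by exists r => //; rewrite eq_sym r1 eq_sym r2.
move/hasP => [p ph]; rewrite has_rcons => /orP [pe|]; first by exists p.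
by move=> hp; move/hasPn: nc => /(_ p ph); rewrite hp.
Qed.

Variable out : seq (F * F) -> F.

Lemma boundB T : ((#|F| - T*T) *
  \sum_(pi : {perm F}) \sum_(s : F) (~~ coll (H pi s T) && (out (H pi s T) == s))
   <= #|F| * #|{perm F}|)%N.
Proof.
rewrite (split_hist T (fun h _ s => ~~ coll h && (out h == s))) big_distrr /=.
rewrite -(sum_cnt T); apply: leq_sum => h _.
case: (boolP (coll h)) => c /=.
  by rewrite big1 ?muln0 // => s _; rewrite big1 // => pi _; rewrite muln0.
have := cnt_bound [set out h] c; rewrite cards1 mul1n size_tuple big_set1 => le.
apply: leq_trans le; rewrite leq_mul2l; apply/orP; right.
rewrite (bigD1 (out h)) //= [X in (_ + X <= _)%N]big1 ?addn0.
  rewrite /cnt size_tuple; apply: eq_leq; apply: eq_bigr => pi _.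
  by rewrite eqxx muln1.
move=> s ns; rewrite big1 // => pi _.
by rewrite eq_sym in ns; rewrite (negbTE ns) muln0.
Qed.

Definition Sh (h : seq (F*F)) :=
  [set (qy h j - (qf h).2) / ((qf h).1 - qx h j) | j : 'I_(size h)].

Lemma boundA k : ((#|F| - k*k) *
  \sum_(pi : {perm F}) \sum_(s : F) (~~ coll (H pi s k) && coll (H pi s k.+1))
   <= k * (#|F| * #|{perm F}|))%N.
Proof.
have E : (\sum_(pi : {perm F}) \sum_(s : F) (~~ coll (H pi s k) && coll (H pi s k.+1)) =
   \sum_(h : k.-tuple (F*F)) \sum_(s : F) \sum_(pi : {perm F})
      (H pi s k == h) * (~~ coll h && coll (rcons h (hls_oracle pi s (qf h)))))%N
  := split_hist k (fun h pi s => ~~ coll h && coll (rcons h (hls_oracle pi s (qf h)))).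
rewrite E big_distrr /= -(sum_cnt k) big_distrr /=; apply: leq_sum => h _.
case: (boolP (coll h)) => c /=.
  by rewrite big1 ?muln0 // => s _; rewrite big1 // => pi _; rewrite muln0.
have le1 : (\sum_(s : F) \sum_(pi : {perm F})
      (H pi s k == h) * coll (rcons h (hls_oracle pi s (qf h)))
     <= \sum_(s in Sh h) cnt h s)%N.
  rewrite [X in (_ <= X)%N]big_mkcond /=; apply: leq_sum => s _.
  case: ifP => sS.
    rewrite /cnt size_tuple; apply: leq_sum => pi _.
    by case: (H pi s k == h); case: coll.
  rewrite big1 // => pi _.
  case: eqP => //= Hh; case: (boolP (coll _)) => // cr; exfalso.
  have [p ph /andP [p1 p2]] := coll_rcons c cr.
  have [j jl pj] := nthP (0,0) ph.
  have Hh' : H pi s (size h) = h by rewrite size_tuple.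
  have [E1 E2] := proj1 (HP pi s h) Hh' j jl.
  move: p1 p2; rewrite -pj /= -/(hx h j) -/(ans h j) E1 -E2 (inj_eq perm_inj).
  move=> p1 /eqP p2; move/negbT: sS => /negP; apply.
  apply/imsetP; exists (Ordinal jl) => //=.
  have d0 : (qf h).1 - qx h j != 0 by rewrite subr_eq0 eq_sym.
  rewrite /qz in p2.
  have -> : qy h j - (qf h).2 = (qy h j + s * qx h j) - ((qf h).2 + s * (qf h).1)
     + s * ((qf h).1 - qx h j) by ring.
  by rewrite p2 subrr add0r mulfK.
have := cnt_bound (Sh h) c; rewrite size_tuple => le2.
have cS : (#|Sh h| <= k)%N.
  by rewrite (leq_trans (leq_imset_card _ _)) // card_ord size_tuple.
apply: leq_trans (leq_mul (leqnn _) le1) _.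
by apply: leq_trans le2 _; rewrite leq_mul2r cS orbT.
Qed.

Lemma det T : ((#|F| - T*T) *
  \sum_(pi : {perm F}) \sum_(s : F) (out (H pi s T) == s)
   <= (T*T + 1) * (#|F| * #|{perm F}|))%N.
Proof.
set Q := (#|F| * #|{perm F}|)%N.
have tele : forall pi s T', (coll (H pi s T') <=
    \sum_(k < T') (~~ coll (H pi s k) && coll (H pi s k.+1)))%N.
  move=> pi s; elim=> [|T' IH]; first by [].
  rewrite big_ord_recr.
  case: (boolP (coll (H pi s T'))) => c.
    by apply: leq_trans (leq_b1 _) _; apply: leq_trans (leq_addr _ _); rewrite c in IH.
  by apply: leq_addl.
have pw : forall pi s, ((out (H pi s T) == s) <=
    \sum_(k < T) (~~ coll (H pi s k) && coll (H pi s k.+1)) +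
    (~~ coll (H pi s T) && (out (H pi s T) == s)))%N.
  move=> pi s; case: (boolP (coll (H pi s T))) => c /=.
    have := tele pi s T; rewrite c => t1.
    exact: leq_trans (leq_b1 _) (leq_trans t1 (leq_addr _ _)).
  by rewrite leq_addl.
have step : (\sum_(pi : {perm F}) \sum_(s : F) (out (H pi s T) == s) <=
   \sum_(pi : {perm F}) \sum_(s : F)
    (\sum_(k < T) (~~ coll (H pi s k) && coll (H pi s k.+1)) +
    (~~ coll (H pi s T) && (out (H pi s T) == s))))%N.
  by apply: leq_sum => pi _; apply: leq_sum => s _; exact: pw.
apply: leq_trans (leq_mul (leqnn _) step) _.
under eq_bigr => pi _ do rewrite big_split /=.
rewrite big_split /= mulnDr mulnDl mul1n leq_add //; last exact: boundB.
under eq_bigr => pi _ do rewrite exchange_big /=.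
rewrite exchange_big /= big_distrr /=.
apply: (@leq_trans (\sum_(k < T) k * Q)%N).
  apply: leq_sum => k _.
  apply: leq_trans (boundA k).
  rewrite leq_mul2r; apply/orP; right.
  by apply: leq_sub2l; apply: leq_mul; apply: ltnW.
apply: (@leq_trans (\sum_(k < T) T * Q)%N).
  by apply: leq_sum => k _; rewrite leq_mul2r ltnW ?orbT.
by rewrite sumc card_ord mulnA.
Qed.
End Hist.

Lemma final_rat (q T : nat) : (q <= 9 * T ^ 2)%N ->
  (1 / 3 : rat) ^+ 2 * q%:R <= (T ^ 2)%:R.
Proof.
rewrite -(ler_nat rat) natrM => le.
apply: le_trans (ler_wpM2l _ le) _; first by apply: exprn_ge0.
rewrite mulrA (_ : (1/3 : rat) ^+ 2 * 9%:R = 1) ?mul1r //.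
Qed.

Theorem theorem3 :
  exists c : rat, 0 < c /\
  exists N : nat, forall (F : finFieldType), (N <= #|F|)%N ->
  forall (R : realFieldType) (Omega : finType) (w : Omega -> R) (T : nat)
         (qf : Omega -> seq (F * F) -> F * F)
         (out : Omega -> seq (F * F) -> F),
    (forall o, 0 <= w o) ->
    \sum_(o : Omega) w o = 1 ->
    (forall (pi : {perm F}) (s : F),
        1 / 2 <= \sum_(o : Omega | out o (history (hls_oracle pi s) (qf o) T) == s) w o) ->
    c ^+ 2 * (#|F|)%:R <= (T ^ 2)%:R.
Proof.
exists (1/3); split; first by apply/eqP.
exists 3%N => F Fge R Omega w T qf out w0 w1 hyp.
apply: final_rat.
suff : (#|F| <= 3 * (T * T) + 2)%N.
  rewrite -mulnn; nia.
case: (leqP #|F| (T * T)) => qT; first lia.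
set q := #|F|; set P := #|{perm F}|; set K := ((T * T + 1) * (q * P))%N.
pose succ o := (\sum_(pi : {perm F}) \sum_(s : F)
   (out o (history (hls_oracle pi s) (qf o) T) == s))%N.
have H1 : forall pi s, (1/2 : R) <= \sum_o w o *
     (out o (history (hls_oracle pi s) (qf o) T) == s)%:R.
  move=> pi s; apply: le_trans (hyp pi s) _; rewrite big_mkcond /=.
  by apply: ler_sum => o _; case: ifP => _; rewrite ?mulr1 ?mulr0.
have H2 : ((P * q)%:R / 2 : R) <= \sum_o w o * (succ o)%:R.
  have -> : ((P * q)%:R / 2 : R) =
      \sum_(pi : {perm F}) \sum_(s : F) (1 / 2 : R).
    rewrite !sumr_const -mulrnA -[RHS]mulr_natr mul1r mulrC; congr (_ * _%:R); rewrite mulnC //.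
  apply: le_trans (ler_sum _ (fun pi _ => ler_sum _ (fun s _ => H1 pi s))) _.
  rewrite le_eqVlt; apply/orP; left; apply/eqP; under eq_bigr => pi _ do rewrite exchange_big /=.
  rewrite exchange_big /=; apply: eq_bigr => o _.
  by rewrite /succ natr_sum mulr_sumr; apply: eq_bigr => pi _; rewrite natr_sum mulr_sumr.
have H3 : \sum_o w o * ((q - T * T) * succ o)%:R <= K%:R :> R.
  apply: (@le_trans _ _ (\sum_o w o * K%:R)).
    apply: ler_sum => o _; apply: ler_wpM2l; first exact: w0. rewrite ler_nat.
    exact: det.
  by rewrite -mulr_suml w1 mul1r.
have H4 : (q - T * T)%:R * ((P * q)%:R / 2) <= K%:R :> R.
  apply: le_trans H3.
  apply: le_trans (ler_wpM2l (ler0n _ _) H2) _.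
  rewrite mulr_sumr; apply: ler_sum => o _.
  by rewrite natrM mulrCA.
have H5 : ((q - T * T) * (P * q) <= (2 * (T * T + 1)) * (P * q))%N.
  move: H4; rewrite mulrA ler_pdivrMr ?ltr0n // -!natrM ler_nat /K.
  move=> h; nia.
have Pq : (0 < P * q)%N.
  rewrite muln_gt0; apply/andP; split; last by rewrite /q; lia.
  by apply/card_gt0P; exists 1%g.
move: H5; rewrite leq_pmul2r //; lia.
Qed.
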